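(* Let $A\subseteq\mathcal{R}$ be outer measurable and let $I$ be an interval in $\mathcal{R}$ with $I\cap A=\emptyset$. Then $A\cup I$ is outer measurable and $M_u(A\cup I)=M_u(A)+l(I)$.
   Context: $\mathcal{R}$ denotes the Levi-Civita field: functions $x:\mathbb{Q}\to\mathbb{R}$ with left-finite support, with componentwise addition and formal power series multiplication, ordered by $x>0$ iff $x\ne0$ and $x[\min\operatorname{supp}x]>0$; it is a non-Archimedean ordered field extension of $\mathbb{R}$, Cauchy complete in the order topology, in which all limits and series are taken (a series $\sum a_n$ converges iff $a_n\to0$). An interval is a set $[a,b],[a,b),(a,b]$ or $(a,b)$ with $a<b$ in $\mathcal{R}$, of length $l=b-a$. A cover of $A\subseteq\mathcal{R}$ is a sequence of intervals $(S_n)_{n\ge1}$ with $A\subseteq\bigcup_n S_n$ and $\sum_n l(S_n)$ convergent in $\mathcal{R}$. $A$ is called outer measurable if the infimum $\inf\{\sum_n l(S_n): (S_n)\text{ a cover of }A\}$ exists in $\mathcal{R}$; this infimum is then called the outer measure $M_u(A)$. *)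

(* Defs.v *)
From HB Require Import structures.
From mathcomp Require Import all_boot all_order all_algebra.
From mathcomp Require Import boolp classical_sets functions cardinality reals.
Set Implicit Arguments. Unset Strict Implicit. Unset Printing Implicit Defensive.
Import Order.TTheory GRing.Theory Num.Theory.
Local Open Scope classical_set_scope.
Local Open Scope ring_scope.

Definition left_finite (R : realType) (x : rat -> R) : Prop :=
  forall q : rat, finite_set [set a : rat | x a != 0 /\ a < q].

Record LC (R : realType) := MkLC { lcf : rat -> R ; lcP : left_finite lcf }.
Arguments MkLC {R}.
Arguments lcf {R}.

Definition lc_eq (R : realType) (x y : LC R) : Prop := lcf x = lcf y.

Lemma left_finite0 (R : realType) : left_finite (fun _ : rat => (0 : R)).
Proof.
move=> q; apply: (sub_finite_set (B := set0)); last exact: finite_set0.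
by move=> a /= [/eqP].
Qed.

Lemma left_finiteD (R : realType) (x y : LC R) :
  left_finite (fun q => lcf x q + lcf y q).
Proof.
move=> q; apply: (sub_finite_set (B := [set a | lcf x a != 0 /\ a < q]
   `|` [set a | lcf y a != 0 /\ a < q])); last first.
  by rewrite finite_setU; split; apply: lcP.
move=> a /= [Hn Hq]; case: (eqVneq (lcf x a) 0) => Hx.
  by right; split=> //; move: Hn; rewrite Hx add0r.
by left.
Qed.

Lemma left_finiteN (R : realType) (x : LC R) :
  left_finite (fun q => - lcf x q).
Proof.
move=> q; apply: (sub_finite_set (B := [set a | lcf x a != 0 /\ a < q])).
  by move=> a /= [Hn Hq]; split=> //; rewrite -oppr_eq0.
exact: lcP.
Qed.

Definition lc0 (R : realType) : LC R := MkLC _ (@left_finite0 R).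
Definition lc_add (R : realType) (x y : LC R) : LC R :=
  MkLC _ (left_finiteD x y).
Definition lc_opp (R : realType) (x : LC R) : LC R := MkLC _ (left_finiteN x).
Definition lc_sub (R : realType) (x y : LC R) : LC R := lc_add x (lc_opp y).

(* x > 0 iff x <> 0 and x[min supp x] > 0 : there is a point q with
   x q > 0 and x vanishing below q (so q = min supp x). *)
Definition lc_pos (R : realType) (x : LC R) : Prop :=
  exists q : rat, 0 < lcf x q /\ forall a : rat, a < q -> lcf x a = 0.

Definition lc_lt (R : realType) (x y : LC R) : Prop := lc_pos (lc_sub y x).
Definition lc_le (R : realType) (x y : LC R) : Prop := lc_eq x y \/ lc_lt x y.

Definition lc_limit (R : realType) (u : nat -> LC R) (L : LC R) : Prop :=
  forall eps : LC R, lc_pos eps -> exists N : nat, forall n : nat, (N <= n)%N ->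
    lc_lt (lc_opp eps) (lc_sub (u n) L) /\ lc_lt (lc_sub (u n) L) eps.

Fixpoint lc_psum (R : realType) (u : nat -> LC R) (n : nat) : LC R :=
  match n with
  | O => lc0 R
  | S m => lc_add (lc_psum u m) (u m)
  end.

Definition lc_series_sum (R : realType) (u : nat -> LC R) (s : LC R) : Prop :=
  lc_limit (lc_psum u) s.

Inductive ikind := CC | CO | OC | OO.

(* an interval with endpoints a, b of kind k: [a,b], [a,b), (a,b], (a,b);
   validity (a < b) is required separately by [is_interval]. *)
Record lc_interval (R : realType) := MkInterval
  { ileft : LC R ; iright : LC R ; ikd : ikind }.
Arguments MkInterval {R}.

Definition is_interval (R : realType) (I : lc_interval R) : Prop :=
  lc_lt (ileft I) (iright I).

Definition iset (R : realType) (I : lc_interval R) : set (LC R) :=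
  [set x | match ikd I with
           | CC => lc_le (ileft I) x /\ lc_le x (iright I)
           | CO => lc_le (ileft I) x /\ lc_lt x (iright I)
           | OC => lc_lt (ileft I) x /\ lc_le x (iright I)
           | OO => lc_lt (ileft I) x /\ lc_lt x (iright I)
           end].

Definition ilength (R : realType) (I : lc_interval R) : LC R :=
  lc_sub (iright I) (ileft I).

Definition cover_with_sum (R : realType) (A : set (LC R))
    (S : nat -> lc_interval R) (s : LC R) : Prop :=
  (forall n, is_interval (S n)) /\
  A `<=` \bigcup_n iset (S n) /\
  lc_series_sum (fun n => ilength (S n)) s.

Definition cover_sums (R : realType) (A : set (LC R)) : set (LC R) :=
  [set s | exists S : nat -> lc_interval R, cover_with_sum A S s].

Definition lc_is_inf (R : realType) (V : set (LC R)) (m : LC R) : Prop :=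
  (forall v, V v -> lc_le m v) /\
  (forall m', (forall v, V v -> lc_le m' v) -> lc_le m' m).

Definition outer_measure_is (R : realType) (A : set (LC R)) (m : LC R) : Prop :=
  lc_is_inf (cover_sums A) m.

Definition outer_measurable (R : realType) (A : set (LC R)) : Prop :=
  exists m, outer_measure_is A m.

(* Main.v *)
Require Import Defs.
From HB Require Import structures.
From mathcomp Require Import all_boot all_order all_algebra.
From mathcomp Require Import boolp classical_sets functions cardinality reals.
From mathcomp Require Import finmap ring lra zify.
Set Implicit Arguments. Unset Strict Implicit. Unset Printing Implicit Defensive.
Import Order.TTheory GRing.Theory Num.Theory.
Local Open Scope classical_set_scope.
Local Open Scope ring_scope.

Section Fun.
Variable R : realType.
Implicit Types (f g h : rat -> R).

Definition posf f := exists q : rat, 0 < f q /\ forall a : rat, a < q -> f a = 0.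
Definition nnf f := (forall q, f q = 0) \/ posf f.

Lemma posf_ext f g : posf f -> (forall q, g q = f q) -> posf g.
Proof. by move=> [q [H1 H2]] E; exists q; rewrite E; split=> // a /H2; rewrite E. Qed.

Lemma nnf_ext f g : nnf f -> (forall q, g q = f q) -> nnf g.
Proof.
move=> [H|H] E; first by left=> q; rewrite E.
by right; apply: posf_ext H E.
Qed.

Lemma posf_add f g h : posf f -> posf g -> (forall q, h q = f q + g q) -> posf h.
Proof.
move=> [q1 [p1 z1]] [q2 [p2 z2]] E.
case: (ltgtP q1 q2) => H.
- exists q1; rewrite E (z2 q1 H) addr0; split=> // a Ha.
  by rewrite E z1 // z2 ?addr0 //; apply: lt_trans Ha H.
- exists q2; rewrite E (z1 q2 H) add0r; split=> // a Ha.
  by rewrite E z1 ?z2 ?addr0 //; apply: lt_trans Ha H.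
- subst q2; exists q1; rewrite E; split; first exact: addr_gt0.
  by move=> a Ha; rewrite E z1 // z2 // addr0.
Qed.

Lemma posf_scale c f h : 0 < c -> posf f -> (forall q, h q = c * f q) -> posf h.
Proof.
move=> c0 [q [p z]] E; exists q; rewrite E; split; first exact: mulr_gt0.
by move=> a Ha; rewrite E z // mulr0.
Qed.

Lemma posf_neq0 f : posf f -> (forall q, f q = 0) -> False.
Proof. by move=> [q [p _]] H; move: p; rewrite H ltxx. Qed.

Lemma posf_asym f g : posf f -> posf g -> (forall q, g q = - f q) -> False.
Proof.
move=> [q1 [p1 z1]] [q2 [p2 z2]] E.
case: (ltgtP q1 q2) => H.
- by move: (z2 _ H); rewrite E => /eqP; rewrite oppr_eq0 => /eqP; move: p1; move=> /[swap] ->; rewrite ltxx.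
- by move: p2; rewrite E z1 // oppr0 ltxx.
- by subst; move: p2; rewrite E oppr_gt0 => /(lt_trans p1); rewrite ltxx.
Qed.

Lemma nnf_add f g h : nnf f -> nnf g -> (forall q, h q = f q + g q) -> nnf h.
Proof.
move=> [F|F] [G|G] E.
- by left=> q; rewrite E F G addr0.
- by right; apply: posf_ext G _ => q; rewrite E F add0r.
- by right; apply: posf_ext F _ => q; rewrite E G addr0.
- by right; apply: posf_add F G E.
Qed.

Lemma posf_nnf_add f g h : posf f -> nnf g -> (forall q, h q = f q + g q) -> posf h.
Proof.
move=> F [G|G] E; last by apply: posf_add F G E.
by apply: posf_ext F _ => q; rewrite E G addr0.
Qed.

Lemma nnf_scale c f h : 0 <= c -> nnf f -> (forall q, h q = c * f q) -> nnf h.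
Proof.
rewrite le_eqVlt => /orP [/eqP c0|c0] F E.
  by left=> q; rewrite E -c0 mul0r.
case: F => F; first by left=> q; rewrite E F mulr0.
by right; apply: posf_scale c0 F E.
Qed.

Lemma nnf0 f : (forall q, f q = 0) -> nnf f.
Proof. by left. Qed.

Lemma posf_nnf f : posf f -> nnf f.
Proof. by right. Qed.

Lemma nnf_posf_contra f g : nnf f -> posf g -> (forall q, f q + g q = 0) -> False.
Proof.
move=> [F|F] G E.
  by apply: (posf_neq0 G) => q; move: (E q); rewrite F add0r.
apply: (posf_asym F G) => q; apply/eqP; rewrite -addr_eq0 addrC; exact/eqP.
Qed.

Lemma seq_min (s : seq rat) a : a \in s -> exists2 m, m \in s & forall b, b \in s -> m <= b.
Proof.
elim: s a => // c s IH a _.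
case: (pselect (exists b, b \in s)) => [[b /IH [m ms mle]]|ns].
- case: (leP c m) => H.
    exists c; first exact: mem_head.
    by move=> b'; rewrite inE => /orP[/eqP->//|/mle]; apply: le_trans.
  exists m; first by rewrite inE ms orbT.
  by move=> b'; rewrite inE => /orP[/eqP->|/mle//]; apply: ltW.
- exists c; first exact: mem_head.
  move=> b; rewrite inE => /orP[/eqP->//|bs]; exfalso; apply: ns; by exists b.
Qed.

Lemma trich f : left_finite f -> (forall q, f q = 0) \/ posf f \/ posf (fun q => - f q).
Proof.
move=> lf.
case: (pselect (forall q, f q = 0)) => [H|/existsNP [a Ha]]; first by left.
right.
pose S := [set b : rat | f b != 0 /\ b < a + 1].
have fS : finite_set S := lf (a + 1).
have aS : a \in fset_set S.
  rewrite in_fset_set //; apply/mem_set; split; first exact/eqP.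
  by rewrite ltrDl.
have [m ms mle] := seq_min aS.
move: ms; rewrite in_fset_set // => /set_mem [fm ma].
have z : forall b, b < m -> f b = 0.
  move=> b bm; apply/eqP; apply/negP => /negP fb.
  have : b \in fset_set S.
    by rewrite in_fset_set //; apply/mem_set; split=> //; apply: lt_trans bm ma.
  by move/mle; rewrite leNgt bm.
case: (ltgtP (f m) 0) => H.
- right; exists m; split; first by rewrite oppr_gt0.
  by move=> b /z ->; rewrite oppr0.
- by left; exists m.
- by move: fm; rewrite H eqxx.
Qed.
End Fun.

Section Avoid.
Variable R : realType.
Variable g : nat -> R.

Definition tstep (p : R * R) (n : nat) : R * R :=
  let w := (p.2 - p.1) / 3 in
  if g n <= p.1 + w then (p.2 - w, p.2) else (p.1, p.1 + w).

Fixpoint tiv (n : nat) : R * R :=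
  match n with 0 => (1/3, 2/3) | n.+1 => tstep (tiv n) n end.

Lemma tiv_lt n : (tiv n).1 < (tiv n).2.
Proof.
elim: n => [|n IH] /=; first lra.
rewrite /tstep; case: ifP => _ /=; lra.
Qed.

Lemma tiv_step n : (tiv n).1 <= (tiv n.+1).1 /\ (tiv n.+1).2 <= (tiv n).2 /\
  (g n < (tiv n.+1).1 \/ (tiv n.+1).2 < g n).
Proof.
have := tiv_lt n; rewrite /= /tstep.
case: (tiv n) => x y /= H; case: ifP => /= H2.
  by split; [lra|split; [lra|left; lra]].
by move/negbT: H2; rewrite -ltNge => H2; split; [lra|split; [lra|right; lra]].
Qed.

Lemma tiv_mono1 n m : (n <= m)%N -> (tiv n).1 <= (tiv m).1.
Proof.
elim: m => [|m IH]; first by rewrite leqn0 => /eqP ->.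
rewrite leq_eqVlt => /orP [/eqP -> //|H].
apply: le_trans (IH H) _; exact: (tiv_step m).1.
Qed.

Lemma tiv_mono2 n m : (n <= m)%N -> (tiv m).2 <= (tiv n).2.
Proof.
elim: m => [|m IH]; first by rewrite leqn0 => /eqP ->.
rewrite leq_eqVlt => /orP [/eqP -> //|H].
apply: le_trans _ (IH H); exact: (tiv_step m).2.1.
Qed.

Lemma tiv_cross n m : (tiv n).1 < (tiv m).2.
Proof.
apply: (@le_lt_trans _ _ (tiv (maxn n m)).1); first by apply: tiv_mono1; exact: leq_maxl.
apply: (@lt_le_trans _ _ (tiv (maxn n m)).2); first exact: tiv_lt.
by apply: tiv_mono2; exact: leq_maxr.
Qed.

Lemma avoid_seq : exists t : R, 0 < t < 1 /\ forall n, t != g n.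
Proof.
pose E := [set x | exists n, x = (tiv n).1].
have hs : has_sup E.
  split; first by exists (tiv 0).1; exists 0%N.
  exists (tiv 0).2 => x [n ->]; apply/ltW; exact: tiv_cross.
have ub : forall n, (tiv n).1 <= sup E.
  by move=> n; apply: sup_upper_bound => //; exists n.
have lb : forall n, sup E <= (tiv n).2.
  move=> n; apply: ge_sup; first by exists (tiv 0).1; exists 0%N.
  by move=> x [m ->]; apply/ltW; exact: tiv_cross.
exists (sup E); split.
  have := ub 0%N; have := lb 0%N => /= H1 H2; apply/andP; split; lra.
move=> n; have [_ [_ H]] := tiv_step n; have := ub n.+1; have := lb n.+1.
move=> H1 H2; case: H => H; apply/eqP => E1; rewrite E1 in H1 H2; lra.
Qed.
End Avoid.

Section LCord.
Variable R : realType.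
Implicit Types (x y z : LC R).

Lemma lc_ext x y : lcf x = lcf y -> x = y.
Proof.
case: x => fx px; case: y => fy py /= E; subst fy.
by rewrite (Prop_irrelevance px py).
Qed.

Lemma leE x y : lc_le x y <-> nnf (fun q => lcf y q - lcf x q).
Proof.
split.
  case=> [E|H]; last by right.
  by left=> q; rewrite /lc_eq in E; rewrite E subrr.
case=> [H|H]; last by right.
left; rewrite /lc_eq; apply: funext => q; apply/eqP.
by rewrite eq_sym -subr_eq0 H.
Qed.

Lemma ltE x y : lc_lt x y <-> posf (fun q => lcf y q - lcf x q).
Proof. by []. Qed.

Lemma lc_total x y : lc_le x y \/ lc_lt y x.
Proof.
case: (trich (lcP (lc_sub y x))) => [H|[H|H]].
- by left; apply/leE; left.
- by left; apply/leE; right.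
- right; apply/ltE; apply: posf_ext H _ => q /=; ring.
Qed.

Lemma le_refl x : lc_le x x.
Proof. by left. Qed.

Lemma ltW' x y : lc_lt x y -> lc_le x y.
Proof. by right. Qed.

Lemma le_trans' x y z : lc_le x y -> lc_le y z -> lc_le x z.
Proof.
move=> /leE H1 /leE H2; apply/leE; apply: nnf_add H1 H2 _ => q; ring.
Qed.

Lemma lt_le_trans' x y z : lc_lt x y -> lc_le y z -> lc_lt x z.
Proof.
move=> /ltE H1 /leE H2; apply/ltE; apply: posf_nnf_add H1 H2 _ => q; ring.
Qed.

Lemma le_lt_trans' x y z : lc_le x y -> lc_lt y z -> lc_lt x z.
Proof.
move=> /leE H1 /ltE H2; apply/ltE; apply: posf_nnf_add H2 H1 _ => q; ring.
Qed.

Lemma lt_trans' x y z : lc_lt x y -> lc_lt y z -> lc_lt x z.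
Proof. by move=> H1 H2; apply: lt_le_trans' H1 (ltW' H2). Qed.

Lemma lt_irr x : lc_lt x x -> False.
Proof. move/ltE => H; apply: posf_neq0 H _ => q; ring. Qed.

Lemma le_lt_false x y : lc_le x y -> lc_lt y x -> False.
Proof. by move=> H1 H2; apply: lt_irr (le_lt_trans' H1 H2). Qed.

Lemma lt_neq x y : lc_lt x y -> x <> y.
Proof. by move=> H E; subst; apply: lt_irr H. Qed.

Lemma le_lt_neq x y : lc_le x y -> x <> y -> lc_lt x y.
Proof. by case=> // /lc_ext. Qed.

Lemma left_finite_mono (c : R) (e : rat) : left_finite (fun q => if q == e then c else 0).
Proof.
move=> q; apply: (sub_finite_set (B := [set e])); last exact: finite_set1.
move=> a /= [H _]; move: H; case: (a =P e) => [-> _|_] //; by rewrite eqxx.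
Qed.

Definition mono (c : R) (e : rat) : LC R := MkLC _ (left_finite_mono c e).

Lemma monoE c e q : lcf (mono c e) q = if q == e then c else 0.
Proof. by []. Qed.

Lemma posf_mono (c : R) e : 0 < c -> posf (lcf (mono c e)).
Proof.
move=> c0; exists e; rewrite monoE eqxx; split=> // a ae.
by rewrite monoE; case: eqP => // E; move: ae; rewrite E ltxx.
Qed.

Lemma lcf_psum (u : nat -> LC R) n q : lcf (lc_psum u n) q = \sum_(i < n) lcf (u i) q.
Proof. by elim: n => [|n IH]; rewrite ?big_ord0 // big_ord_recr /= IH. Qed.

End LCord.

Section Clamp.
Variable R : realType.
Implicit Types (x y z a b c d lo hi : LC R).

Lemma le_anti x y : lc_le x y -> lc_le y x -> x = y.
Proof.
move=> /leE [H1|H1] /leE H2.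
  by apply: lc_ext; apply: funext => q; apply/eqP; rewrite eq_sym -subr_eq0 H1.
exfalso; apply: nnf_posf_contra H2 H1 _ => q; ring.
Qed.

Definition lmin x y := if `[< lc_le x y >] then x else y.
Definition lmax x y := if `[< lc_le x y >] then y else x.
Definition clamp lo hi x := lmax lo (lmin x hi).

Lemma clamp_cases lo hi x : lc_le lo hi ->
  (lc_le x lo /\ clamp lo hi x = lo) \/
  (lc_le lo x /\ lc_le x hi /\ clamp lo hi x = x) \/
  (lc_le hi x /\ clamp lo hi x = hi).
Proof.
move=> lh; rewrite /clamp /lmin /lmax.
case: (asboolP (lc_le x hi)) => H1.
  case: (asboolP (lc_le lo x)) => H2; first by right; left.
  left; split=> //; by case: (lc_total lo x) => // /ltW'.
case: (asboolP (lc_le lo hi)) => // _.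
right; right; split=> //; by case: (lc_total x hi) => // /ltW'.
Qed.

Lemma clamp_lo lo hi x : lc_le lo hi -> lc_le x lo -> clamp lo hi x = lo.
Proof.
move=> lh xl; case: (clamp_cases x lh) => [[_ ->]//|[[H1 [H2 ->]]|[H1 ->]]].
  exact: le_anti.
apply: le_anti => //; apply: le_trans' H1 xl.
Qed.

Lemma clamp_mid lo hi x : lc_le lo x -> lc_le x hi -> clamp lo hi x = x.
Proof.
move=> lx xh; have lh := le_trans' lx xh.
case: (clamp_cases x lh) => [[H1 ->]|[[H1 [H2 ->]]|[H1 ->]]] //.
- exact: le_anti.
- exact: le_anti.
Qed.

Lemma clamp_hi lo hi x : lc_le lo hi -> lc_le hi x -> clamp lo hi x = hi.
Proof.
move=> lh hx; case: (clamp_cases x lh) => [[H1 ->]|[[H1 [H2 ->]]|[_ ->]]] //.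
- apply: le_anti => //; apply: le_trans' hx H1.
- exact: le_anti.
Qed.

Lemma clamp_ge_lo lo hi x : lc_le lo hi -> lc_le lo (clamp lo hi x).
Proof.
move=> lh; case: (clamp_cases x lh) => [[_ ->]|[[H1 [H2 ->]]|[H1 ->]]] //.
exact: le_refl.
Qed.

Lemma clamp_le_hi lo hi x : lc_le lo hi -> lc_le (clamp lo hi x) hi.
Proof.
move=> lh; case: (clamp_cases x lh) => [[_ ->]|[[H1 [H2 ->]]|[H1 ->]]] //.
exact: le_refl.
Qed.

Lemma clamp_mono lo hi x y : lc_le lo hi -> lc_le x y ->
  lc_le (clamp lo hi x) (clamp lo hi y).
Proof.
move=> lh xy; case: (clamp_cases x lh) => [[H1 ->]|[[H1 [H2 ->]]|[H1 ->]]].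
- exact: clamp_ge_lo.
- case: (clamp_cases y lh) => [[H3 ->]|[[H3 [H4 ->]]|[H3 ->]]] //.
  exact: le_trans' xy H3.
- case: (clamp_cases y lh) => [[H3 ->]|[[H3 [H4 ->]]|[H3 ->]]].
  + by apply: le_trans' H1 (le_trans' xy H3).
  + by apply: le_trans' H1 xy.
  + exact: le_refl.
Qed.

Lemma clamp_ge lo hi x y : lc_le lo hi -> lc_le x hi -> lc_le x y ->
  lc_le x (clamp lo hi y).
Proof.
move=> lh xh xy; case: (clamp_cases y lh) => [[H1 ->]|[[H1 [H2 ->]]|[H1 ->]]] //.
exact: le_trans' xy H1.
Qed.

Lemma clamp_le lo hi x y : lc_le lo hi -> lc_le lo x -> lc_le y x ->
  lc_le (clamp lo hi y) x.
Proof.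
move=> lh lx yx; case: (clamp_cases y lh) => [[H1 ->]|[[H1 [H2 ->]]|[H1 ->]]] //.
exact: le_trans' H1 yx.
Qed.

Lemma clamp_split a m1 m2 b x : lc_le a m1 -> lc_le m1 m2 -> lc_le m2 b ->
  forall q, lcf (clamp a b x) q = lcf (clamp a m1 x) q + lcf (clamp m1 m2 x) q
     + lcf (clamp m2 b x) q - lcf m1 q - lcf m2 q.
Proof.
move=> h1 h2 h3 q.
have am2 := le_trans' h1 h2; have ab := le_trans' am2 h3; have m1b := le_trans' h2 h3.
case: (lc_total x a) => [xa|/ltW' ax].
  rewrite (clamp_lo ab xa) (clamp_lo h1 xa) (clamp_lo h2 (le_trans' xa h1)).
  rewrite (clamp_lo h3 (le_trans' xa am2)); ring.
case: (lc_total x m1) => [xm1|/ltW' m1x].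
  rewrite (clamp_mid ax (le_trans' xm1 m1b)) (clamp_mid ax xm1) (clamp_lo h2 xm1).
  rewrite (clamp_lo h3 (le_trans' xm1 h2)); ring.
case: (lc_total x m2) => [xm2|/ltW' m2x].
  rewrite (clamp_mid ax (le_trans' xm2 h3)) (clamp_hi h1 m1x) (clamp_mid m1x xm2).
  rewrite (clamp_lo h3 xm2); ring.
case: (lc_total x b) => [xb|/ltW' bx].
  rewrite (clamp_mid ax xb) (clamp_hi h1 m1x) (clamp_hi h2 m2x) (clamp_mid m2x xb); ring.
rewrite (clamp_hi ab bx) (clamp_hi h1 m1x) (clamp_hi h2 m2x) (clamp_hi h3 bx); ring.
Qed.

Lemma ov_split a m1 m2 b c d : lc_le a m1 -> lc_le m1 m2 -> lc_le m2 b -> lc_le c d ->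
  nnf (fun q => (lcf (clamp a b d) q - lcf (clamp a b c) q)
     - (lcf (clamp a m1 d) q - lcf (clamp a m1 c) q)
     - (lcf (clamp m2 b d) q - lcf (clamp m2 b c) q)).
Proof.
move=> h1 h2 h3 cd.
have /leE := clamp_mono h2 cd.
move/nnf_ext; apply => q.
rewrite (clamp_split d h1 h2 h3) (clamp_split c h1 h2 h3); ring.
Qed.

Lemma piece_id a b c d : lc_le a b -> lc_le c d -> forall q,
  lcf (clamp c d a) q + (lcf (clamp a b d) q - lcf (clamp a b c) q) = lcf (clamp c d b) q.
Proof.
move=> ab cd q.
case: (lc_total d a) => [da|/ltW' ad].
  have ca := le_trans' cd da.
  rewrite (clamp_hi cd da) (clamp_lo ab da) (clamp_lo ab ca) (clamp_hi cd (le_trans' da ab)); ring.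
case: (lc_total c a) => [ca|/ltW' ac].
  case: (lc_total d b) => [db|/ltW' bd].
    rewrite (clamp_mid ca ad) (clamp_mid ad db) (clamp_lo ab ca) (clamp_hi cd db); ring.
  rewrite (clamp_mid ca ad) (clamp_hi ab bd) (clamp_lo ab ca) (clamp_mid (le_trans' ca ab) bd); ring.
case: (lc_total d b) => [db|/ltW' bd].
  rewrite (clamp_lo cd ac) (clamp_mid (le_trans' ac cd) db) (clamp_mid ac (le_trans' cd db)) (clamp_hi cd db); ring.
case: (lc_total c b) => [cb|/ltW' bc].
  rewrite (clamp_lo cd ac) (clamp_hi ab bd) (clamp_mid ac cb) (clamp_mid cb bd); ring.
rewrite (clamp_lo cd ac) (clamp_hi ab bd) (clamp_hi ab bc) (clamp_lo cd bc); ring.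
Qed.
End Clamp.

Section GapLemma.
Variable R : realType.
Variable delta : LC R.
Hypothesis dpos : posf (lcf delta).
Variables cL dL : nat -> LC R.
Hypothesis hcd : forall i, lc_le (cL i) (dL i).

Definition Gap N a b := forall u v, lc_le a u -> lc_lt u v -> lc_le v b ->
  lc_le delta (lc_sub v u) ->
  exists i, (i < N)%N /\ exists y, lc_lt u y /\ lc_lt y v /\ lc_lt (cL i) y /\ lc_lt y (dL i).

Definition ovsum N a b q :=
  \sum_(i < N) (lcf (clamp a b (dL i)) q - lcf (clamp a b (cL i)) q).

Lemma nnf_sum N (F : nat -> rat -> R) : (forall i, (i < N)%N -> nnf (F i)) ->
  nnf (fun q => \sum_(i < N) F i q).
Proof.
elim: N => [|N IH] H.
  by left=> q; rewrite big_ord0.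
have H1 : nnf (fun q => \sum_(i < N) F i q) by apply: IH => i iN; apply: H; exact: ltnW.
apply: nnf_add H1 (H N (ltnSn N)) _ => q; by rewrite big_ord_recr.
Qed.

Lemma gap_bound N : forall a b, lc_le a b -> Gap N a b ->
  nnf (fun q => ovsum N a b q + 2 ^+ N * lcf delta q - (lcf b q - lcf a q)).
Proof.
elim: N => [|N IH] a b ab G.
  case: (lc_total (lc_sub b a) delta) => [/leE H|H].
    by apply: nnf_ext H _ => q /=; rewrite /ovsum big_ord0 expr0; ring.
  have ablt : lc_lt a b.
    apply/ltE; move/ltE: H => H; apply: posf_add H dpos _ => q /=; ring.
  have [i [+ _]] := G a b (le_refl a) ablt (le_refl b) (ltW' H).
  by rewrite ltn0.
pose m1 := clamp a b (cL N); pose m2 := clamp a b (dL N).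
have h1 : lc_le a m1 by apply: clamp_ge_lo.
have h2 : lc_le m1 m2 by apply: clamp_mono.
have h3 : lc_le m2 b by apply: clamp_le_hi.
have m1b := le_trans' h2 h3.
have am2 := le_trans' h1 h2.
have eqN : forall i, (i < N.+1)%N -> (N <= i)%N -> i = N.
  by move=> i H1 H2; apply/eqP; rewrite eqn_leq H2 -ltnS H1.
have G1 : Gap N a m1.
  move=> u v au uv vm1 dvu.
  have [i [iN [y [uy [yv [cy yd]]]]]] := G u v au uv (le_trans' vm1 m1b) dvu.
  case: (ltnP i N) => iN'; first by exists i; split=> //; exists y.
  move: cy; rewrite (eqN _ iN iN') => cy; exfalso.
  case: (clamp_cases (cL N) ab) => [[_ E]|[[_ [_ E]]|[bc E]]]; rewrite -/m1 in E; rewrite E in vm1.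
  - exact: le_lt_false (le_trans' vm1 au) uv.
  - exact: lt_irr (lt_trans' cy (lt_le_trans' yv vm1)).
  - exact: lt_irr (lt_le_trans' (lt_trans' cy yv) (le_trans' vm1 bc)).
have G2 : Gap N m2 b.
  move=> u v au uv vb dvu.
  have [i [iN [y [uy [yv [cy yd]]]]]] := G u v (le_trans' am2 au) uv vb dvu.
  case: (ltnP i N) => iN'; first by exists i; split=> //; exists y.
  move: yd; rewrite (eqN _ iN iN') => yd; exfalso.
  case: (clamp_cases (dL N) ab) => [[da E]|[[_ [_ E]]|[bd E]]]; rewrite -/m2 in E; rewrite E in au.
  - exact: lt_irr (lt_trans' yd (le_lt_trans' (le_trans' da au) uy)).
  - exact: lt_irr (lt_trans' yd (le_lt_trans' au uy)).
  - exact: le_lt_false (le_trans' vb au) uv.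
have I1 := IH a m1 h1 G1.
have I2 := IH m2 b h3 G2.
have S : nnf (fun q => ovsum N a b q - ovsum N a m1 q - ovsum N m2 b q).
  have := nnf_sum (fun i (_ : (i < N)%N) => ov_split h1 h2 h3 (hcd i)).
  by move/nnf_ext; apply => q; rewrite /ovsum -!sumrB.
have S2 := nnf_add (nnf_add S I1 (fun q => erefl)) I2 (fun q => erefl).
apply: nnf_ext S2 _ => q /=.
rewrite /ovsum big_ord_recr /= -/m1 -/m2 exprS; ring.
Qed.
End GapLemma.

Section Series.
Variable R : realType.
Implicit Types (u v : nat -> LC R) (x y m : LC R).

Lemma limit_shift u v L M k j : lc_limit u L ->
  (forall n q, lcf (v (n + k)%N) q - lcf M q = lcf (u (n + j)%N) q - lcf L q) ->
  lc_limit v M.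
Proof.
move=> H E eps ep; have [N HN] := H eps ep.
exists (N + k)%N => n nN.
have nk : (k <= n)%N by lia.
have E' := E (n - k)%N; rewrite subnK // in E'.
have [H1 H2] := HN (n - k + j)%N ltac:(lia).
split.
  by apply: posf_ext H1 _ => q /=; rewrite E'.
by apply: posf_ext H2 _ => q /=; rewrite E'.
Qed.

Lemma below_mono (g : rat -> R) c e e' : posf g ->
  posf (fun q => lcf (mono c e') q - g q) -> e < e' ->
  forall q, q <= e -> g q = 0.
Proof.
move=> [q1 [p1 z1]] [q2 [p2 z2]] ee'.
suff eq1 : e < q1 by move=> q qe; apply: z1; apply: le_lt_trans qe eq1.
rewrite ltNge; apply/negP => q1e.
have q1e' : q1 < e' by apply: le_lt_trans q1e ee'.
have hq1 : lcf (mono c e') q1 - g q1 < 0.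
  by rewrite monoE (lt_eqF q1e') sub0r oppr_lt0.
case: (ltgtP q1 q2) => H.
- by move: hq1; rewrite z2 // ltxx.
- have q2e' : q2 < e' by apply: lt_trans H q1e'.
  by move: p2; rewrite monoE (lt_eqF q2e') z1 // subrr ltxx.
- by subst; move: (lt_trans p2 hq1); rewrite ltxx.
Qed.

Lemma terms_small u s e : lc_limit (lc_psum u) s -> (forall n, posf (lcf (u n))) ->
  exists N, forall n, (N <= n)%N -> forall q, q <= e -> lcf (u n) q = 0.
Proof.
move=> H up.
have [N HN] := H (mono 1 (e + 1)) (posf_mono _ ltr01).
exists N => n nN.
have [A1 _] := HN n nN; have [_ B2] := HN n.+1 (leqW nN).
apply: (@below_mono _ 2 e (e + 1)) => //; last by rewrite ltrDl.
apply: posf_add A1 B2 _ => q /=; case: (q == e + 1); ring.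
Qed.

Lemma small_lt (eta g : rat -> R) q0 e : 0 < eta q0 -> (forall a, a < q0 -> eta a = 0) ->
  q0 <= e -> (forall q, q <= e -> g q = 0) -> posf (fun q => eta q - g q).
Proof.
move=> p z qe gz; exists q0; rewrite gz // subr0; split=> // a aq.
by rewrite z // gz ?subr0 //; apply: ltW; apply: lt_le_trans aq qe.
Qed.

Lemma le_of_eps m x : (forall eta : LC R, posf (lcf eta) -> lc_le m (lc_add x eta)) ->
  lc_le m x.
Proof.
move=> Hy; case: (lc_total m x) => // /ltE [q [p z]]; exfalso.
pose c := lcf m q - lcf x q.
have c0 : 0 < c / 2 by apply: divr_gt0.
have /leE Hn := Hy (mono (c / 2) q) (posf_mono _ c0).
have P : posf (fun r => lcf m r - lcf x r - lcf (mono (c / 2) q) r).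
  exists q; rewrite monoE eqxx; split.
    rewrite -/c; lra.
  move=> a aq; rewrite monoE (lt_eqF aq); move: (z a aq) => /= ->; ring.
by apply: nnf_posf_contra Hn P _ => r /=; ring.
Qed.
End Series.

Section Main.
Variable R : realType.

Definition pick0 (P : R -> Prop) : R :=
  match pselect (exists t, P t) with
  | left ex => proj1_sig (cid ex)
  | right _ => 0 end.

Lemma pick0E P t : P t -> (forall t1 t2, P t1 -> P t2 -> t1 = t2) -> pick0 P = t.
Proof.
move=> Pt U; rewrite /pick0; case: pselect => [ex|nex]; last by exfalso; apply: nex; exists t.
by case: cid => t0 /= Pt0; apply: U.
Qed.

Lemma avoid3 (g0 g1 g2 : nat -> R) : exists t : R, 0 < t < 1 /\
  forall n, t != g0 n /\ t != g1 n /\ t != g2 n.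
Proof.
pose g m := if (m %% 3 == 0)%N then g0 (m %/ 3)%N else if (m %% 3 == 1)%N then g1 (m %/ 3)%N
  else g2 (m %/ 3)%N.
have [t [t01 tg]] := avoid_seq g.
exists t; split=> // n.
have e0 : ((3 * n) %% 3 = 0 /\ (3 * n) %/ 3 = n)%N by lia.
have e1 : ((3 * n + 1) %% 3 = 1 /\ (3 * n + 1) %/ 3 = n)%N by lia.
have e2 : ((3 * n + 2) %% 3 = 2 /\ (3 * n + 2) %/ 3 = n)%N by lia.
have := tg (3 * n)%N; have := tg (3 * n + 1)%N; have := tg (3 * n + 2)%N.
rewrite /g; case: e0 => -> ->; case: e1 => -> ->; case: e2 => -> ->; by [].
Qed.

Lemma iset_closed (J : lc_interval R) x : iset J x ->
  lc_le (ileft J) x /\ lc_le x (iright J).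
Proof.
rewrite /iset; case: (ikd J) => -[H1 H2]; split=> //; exact: ltW'.
Qed.

Lemma in_interval (J : lc_interval R) x : lc_lt (ileft J) x -> lc_lt x (iright J) ->
  iset J x.
Proof.
move=> H1 H2; rewrite /iset; case: (ikd J); split=> //; exact: ltW'.
Qed.

Lemma out_interval (J : lc_interval R) x : ~ iset J x ->
  lc_le x (ileft J) \/ lc_le (iright J) x.
Proof.
move=> H; case: (lc_total x (ileft J)) => [|H1]; first by left.
case: (lc_total (iright J) x) => [|H2]; first by right.
by exfalso; apply: H; apply: in_interval.
Qed.

Lemma xuniq_aux (u : LC R) e (J : lc_interval R) t1 t2 :
  (forall q, q <= e -> lcf (ilength J) q = 0) ->
  iset J (lc_add u (mono t1 e)) -> iset J (lc_add u (mono t2 e)) -> t1 < t2 -> False.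
Proof.
move=> sm /iset_closed [/leE H1 _] /iset_closed [_ /leE H2] t12.
have P : posf (fun q => lcf (mono (t2 - t1) e) q - lcf (ilength J) q).
  apply: (@small_lt _ _ _ e e) => //.
  - by rewrite monoE eqxx subr_gt0.
  - by move=> a ae; rewrite monoE (lt_eqF ae).
have := nnf_add H1 H2 (fun q => erefl).
move/nnf_posf_contra => /(_ _ P); apply => q /=.
by case: (q == e); ring.
Qed.

Lemma gap_holds (I : lc_interval R) (S : nat -> lc_interval R) (A : set (LC R)) (e : rat) N :
  (A `|` iset I) `<=` \bigcup_n iset (S n) ->
  (forall n, (N <= n)%N -> forall q, q <= e -> lcf (ilength (S n)) q = 0) ->
  Gap (mono 1 e) (fun i => ileft (S i)) (fun i => iright (S i)) N (ileft I) (iright I).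
Proof.
move=> cov small u v au uv vb dvu.
pose x t := lc_add u (mono t e).
have xinj : forall t1 t2, x t1 = x t2 -> t1 = t2.
  move=> t1 t2 /(congr1 (fun f => lcf f e)) /=; rewrite eqxx; exact: addrI.
have xuniq : forall n t1 t2, (N <= n)%N -> iset (S n) (x t1) -> iset (S n) (x t2) -> t1 = t2.
  move=> n t1 t2 nN h1 h2; case: (ltgtP t1 t2) => // h.
  - by exfalso; apply: (xuniq_aux (small n nN) h1 h2 h).
  - by exfalso; apply: (xuniq_aux (small n nN) h2 h1 h).
pose g0 n := pick0 (fun t => (N <= n)%N /\ iset (S n) (x t)).
pose g1 n := pick0 (fun t => x t = ileft (S n)).
pose g2 n := pick0 (fun t => x t = iright (S n)).
have [t [/andP [t0 t1] tne]] := avoid3 g0 g1 g2.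
have ut : lc_lt u (x t).
  by apply/ltE; apply: posf_ext (posf_mono e t0) _ => q /=; ring.
have tv : lc_lt (x t) v.
  move/leE: dvu => H; apply/ltE.
  have P : posf (lcf (mono (1 - t) e)) by apply: posf_mono; rewrite subr_gt0.
  apply: posf_nnf_add P H _ => q /=; case: (q == e); ring.
have xI : iset I (x t).
  by apply: in_interval; [apply: le_lt_trans' au ut|apply: lt_le_trans' tv vb].
have [n _ xn] := cov (x t) (or_intror xI).
case: (ltnP n N) => nN; last first.
  exfalso; have [H0 _] := tne n; move: H0; rewrite /g0 (pick0E (t := t)) ?eqxx //.
  by move=> t1' t2' [_ h1] [_ h2]; apply: xuniq h1 h2.
exists n; split=> //; exists (x t); split=> //; split=> //.
have [c1 c2] := iset_closed xn.
have [_ [H1 H2]] := tne n.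
split; apply: le_lt_neq => // E.
- move: H1; rewrite /g1 (pick0E (t := t)) ?eqxx //.
  by move=> t1' t2' h1 h2; apply: xinj; rewrite h1 h2.
- move: H2; rewrite /g2 (pick0E (t := t)) ?eqxx //.
  by move=> t1' t2' h1 h2; apply: xinj; rewrite h1 h2.
Qed.
End Main.

Section Final.
Variable R : realType.

Lemma upper_part (A : set (LC R)) (I : lc_interval R) mA :
  lc_is_inf (cover_sums A) mA -> is_interval I ->
  forall m', (forall v, cover_sums (A `|` iset I) v -> lc_le m' v) ->
  lc_le m' (lc_add mA (ilength I)).
Proof.
move=> [_ glb] Iint m' Hm'.
suff : lc_le (lc_sub m' (ilength I)) mA.
  by move/leE => H; apply/leE; apply: nnf_ext H _ => q /=; ring.
apply: glb => t [T [Tint [Tcov Tser]]].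
pose U n := if n is k.+1 then T k else I.
have : cover_sums (A `|` iset I) (lc_add (ilength I) t).
  exists U; split; first by case.
  split.
    move=> x [/Tcov [n _ xn]|xI]; first by exists n.+1.
    by exists 0%N.
  apply: (@limit_shift _ _ _ _ _ 1 0 Tser) => n q.
  rewrite addn1 addn0 !lcf_psum big_ord_recl /=; ring.
by move/Hm' => /leE H; apply/leE; apply: nnf_ext H _ => q /=; ring.
Qed.

End Final.

Section Final2.
Variable R : realType.

Lemma lcf_psum_add (u : nat -> LC R) m n q :
  lcf (lc_psum u (m + n)) q = lcf (lc_psum u m) q + lcf (lc_psum (fun k => u (m + k)%N) n) q.
Proof.
elim: n => [|n IH]; first by rewrite addn0 /= addr0.
by rewrite addnS /= IH addrA.
Qed.

Lemma lower_part (A : set (LC R)) (I : lc_interval R) mA (S : nat -> lc_interval R) s :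
  lc_is_inf (cover_sums A) mA -> is_interval I -> iset I `&` A = set0 ->
  cover_with_sum (A `|` iset I) S s -> lc_le (lc_add mA (ilength I)) s.
Proof.
move=> [lbA _] Iint disj [Sint [Scov Sser]].
suff H : lc_le mA (lc_sub s (ilength I)).
  by move/leE: H => H; apply/leE; apply: nnf_ext H _ => q /=; ring.
apply: le_of_eps => eta [q0 [p0 z0]].
pose e := q0 + 1.
pose delta : LC R := mono 1 e.
have dpos : posf (lcf delta) by apply: posf_mono; exact: ltr01.
have Slpos : forall n, posf (lcf (ilength (S n))) by move=> n; exact: Sint n.
have [N HN] := terms_small e Sser Slpos.
pose cL i := ileft (S i); pose dL i := iright (S i).
have hcd : forall i, lc_le (cL i) (dL i) by move=> i; apply: ltW'; exact: Sint i.
have ab : lc_le (ileft I) (iright I) by apply: ltW'.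
have G := gap_holds Scov HN.
have GB := gap_bound dpos hcd ab G.
pose a := ileft I; pose b := iright I.
pose cpp i := clamp (cL i) (dL i) a; pose dpp i := clamp (cL i) (dL i) b.
pose V k := if (k < N)%N then MkInterval (cL k) (lc_add (cpp k) delta) CC
  else if (k < N + N)%N then MkInterval (lc_sub (dpp (k - N)%N) delta) (dL (k - N)%N) CC
  else S (k - N)%N.
pose Vl k := ilength (V k).
pose P := lc_psum Vl (N + N).
pose SN := lc_psum (fun n => ilength (S n)) N.
pose tV := lc_sub (lc_add P s) SN.
have VtailE : forall n, V (n + (N + N))%N = S (n + N)%N.
  move=> n; rewrite /V ifF; last by apply/negbTE; rewrite -leqNgt; lia.
  by rewrite ifF; [congr S; lia| apply/negbTE; rewrite -leqNgt; lia].
have tVc : cover_sums A tV.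
  exists V; split; [|split].
  - move=> k; rewrite /V; case: ifP => k1; [|case: ifP => k2].
    + apply/ltE => /=.
      have /leE H := clamp_ge_lo a (hcd k).
      by apply: posf_nnf_add dpos H _ => q /=; ring.
    + apply/ltE => /=.
      have /leE H := clamp_le_hi b (hcd (k - N)%N).
      by apply: posf_nnf_add dpos H _ => q /=; ring.
    + exact: Sint.
  - move=> x xA; have [n _ xn] := Scov x (or_introl xA).
    have [cx xd] := iset_closed xn.
    case: (ltnP n N) => nN; last first.
      exists (n - N + (N + N))%N => //; rewrite VtailE.
      by rewrite (_ : (n - N + N = n)%N) //; lia.
    have xnI : ~ iset I x.
      by move=> xI; have : (iset I `&` A) x by []; rewrite disj.
    have deltale : forall y, lc_le y (lc_add y delta).
      by move=> y; apply/leE; right; apply: posf_ext dpos _ => q /=; ring.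
    have deltale' : forall y, lc_le (lc_sub y delta) y.
      by move=> y; apply/leE; right; apply: posf_ext dpos _ => q /=; ring.
    case: (out_interval xnI) => [xa|bx].
      exists n => //; rewrite /V nN /=; split=> //.
      by apply: le_trans' (deltale _); apply: clamp_ge.
    exists (N + n)%N => //; rewrite /V ifF; last by apply/negbTE; rewrite -leqNgt; lia.
    rewrite ifT; last by lia.
    rewrite (_ : (N + n - N = n)%N); last by lia.
    split=> //=.
    by apply: le_trans' (deltale' _) _; apply: clamp_le.
  - apply: (@limit_shift _ _ _ _ _ (N + N)%N N Sser) => n q.
    suff E : lcf (lc_psum Vl (n + (N + N))) q - lcf (lc_psum (fun n => ilength (S n)) (n + N)) q
           = lcf P q - lcf SN q.
      have -> : lcf tV q = lcf P q + lcf s q - lcf SN q by [].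
      lra.
    elim: n => [|n IH]; first by rewrite !add0n.
    rewrite !addSn /=.
    rewrite /Vl VtailE.
    move: IH; rewrite /Vl /=; lra.
have le1 := lbA tV tVc.
apply: le_trans' le1 _.
pose K : R := 2 ^+ N + 2 * N%:R.
have Sm : posf (fun q => lcf eta q - lcf (mono K e) q).
  apply: (small_lt p0 z0 (lexx q0)) => q qq0; rewrite monoE.
  case: (q =P e) => // E; exfalso; move: qq0; rewrite E /e; lra.
apply/leE; right; apply: posf_nnf_add Sm GB _ => q.
have ESN : lcf SN q = \sum_(i < N) (lcf (dL i) q - lcf (cL i) q).
  by rewrite lcf_psum.
have EK : lcf (mono K e) q = K * lcf delta q.
  by rewrite /= /delta /=; case: (q == e); ring.
have EK' : \sum_(i < N) (2 * lcf delta q) = 2 * N%:R * lcf delta q.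
  by rewrite sumr_const card_ord -mulr_natr; ring.
have EP : lcf P q = \sum_(i < N) (lcf (dL i) q - lcf (cL i) q)
    - ovsum cL dL N (ileft I) (iright I) q + \sum_(i < N) (2 * lcf delta q).
  rewrite /P lcf_psum_add !lcf_psum /ovsum -sumrB -!big_split /=.
  apply: eq_bigr => i _.
  rewrite /Vl /V /= ltn_ord ifF; last by rewrite ltnNge leq_addr.
  rewrite ltn_add2l ltn_ord addKn /=.
  have := piece_id ab (hcd i) q.
  rewrite /cpp /dpp /a /b /=.
  lra.
rewrite EK /= in EP *.
rewrite EP ESN EK'.
rewrite /K /delta /=; case: (q == e); ring.
Qed.
End Final2.

Unset Implicit Arguments.
Theorem mainTheorem6 (R : realType) (A : set (LC R)) (I : lc_interval R) (mA : LC R) :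
  outer_measure_is A mA ->
  is_interval I ->
  iset I `&` A = set0 ->
  outer_measurable (A `|` iset I) /\
  outer_measure_is (A `|` iset I) (lc_add mA (ilength I)).
Proof.
move=> HA Iint disj.
have H : outer_measure_is (A `|` iset I) (lc_add mA (ilength I)).
  split.
    by move=> v [S cov]; apply: lower_part HA Iint disj cov.
  exact: upper_part HA Iint.
by split=> //; exists (lc_add mA (ilength I)).
Qed.
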